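(* For every positive integer $n$, $$\Phi(n)=\begin{cases} 2n\prod_{p\mid n}\left(1-\frac{\beta(p)}{p}\right), & \text{if } 4\mid n;\\ n\prod_{p\mid n}\left(1-\frac{\beta(p)}{p}\right), & \text{otherwise},\end{cases}$$ where the products run over the primes $p$ dividing $n$.
   Context: For a positive integer $n$, let $\mathcal{G}_n=\{a+bi\in\mathbb{Z}[i]/n\mathbb{Z}[i] : a^2+b^2\equiv 1 \pmod n\}$ and $\Phi(n)=|\mathcal{G}_n|$. For an odd prime $p$, $\beta(p)=\left(\frac{-1}{p}\right)$ is the Legendre symbol, and $\beta(2)=0$. *)

(* Defs.v *)
From HB Require Import structures.
From mathcomp Require Import all_boot all_order all_algebra.
Set Implicit Arguments. Unset Strict Implicit. Unset Printing Implicit Defensive.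
Import Order.TTheory GRing.Theory Num.Theory.

(* G_n = { a + b i in Z[i]/nZ[i] : a^2 + b^2 = 1 mod n }.
   Z[i]/nZ[i] is identified with pairs (a,b) of residues mod n,
   represented by 'I_n * 'I_n (a + b i <-> (a, b)). *)
Definition Gn (n : nat) : {set 'I_n * 'I_n} :=
  [set ab : 'I_n * 'I_n | ((ab.1 : nat) ^ 2 + (ab.2 : nat) ^ 2 == 1 %[mod n])%N].

Definition Phi (n : nat) : nat := #|Gn n|.

Local Open Scope ring_scope.
Definition legendre (a : int) (p : nat) : int :=
  if (p%:Z %| a)%Z then 0
  else if [exists x : 'I_p, (p%:Z %| ((x : nat)%:Z ^+ 2 - a))%Z] then 1 else -1.

Definition beta (p : nat) : int := if p == 2%N then 0 else legendre (-1) p.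

(* Main.v *)
Require Import Defs.
From HB Require Import structures.
From mathcomp Require Import all_boot all_order all_algebra.
From mathcomp Require Import zify ring lra.
Import Order.TTheory GRing.Theory Num.Theory.

Module Part0.

Definition cnt (m M : nat) : nat :=
  \sum_(a < m) \sum_(b < m) ((a ^ 2 + b ^ 2 == 1 %[mod M]) : nat).

Lemma sum_bool_card (T : finType) (P : pred T) :
  \sum_(i : T) (P i : nat) = #|[set i | P i]|.
Proof.
rewrite -sum1_card [RHS]big_mkcond /=; apply: eq_bigr => i _; rewrite inE.
by case: (P i).
Qed.

Lemma Phi_cnt n : Phi n = cnt n n.
Proof.
rewrite /Phi /Gn /cnt pair_big /= sum_bool_card.
by apply: eq_card => -[a b]; rewrite !inE.
Qed.

Lemma sum_split (F : nat -> nat) m t :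
  \sum_(x < m * t) F x = \sum_(i < t) \sum_(a < m) F (a + m * i).
Proof.
elim: t => [|t IH]; first by rewrite muln0 !big_ord0.
rewrite big_ord_recr /= -IH mulnSr big_split_ord /=; congr (_ + _).
by apply: eq_bigr => i _; rewrite addnC.
Qed.

Lemma sum_periodic (F : nat -> nat) m t :
  (forall x, F (x + m) = F x) ->
  \sum_(x < m * t) F x = t * \sum_(x < m) F x.
Proof.
move=> hF; rewrite sum_split.
have hF' : forall a i, F (a + m * i) = F a.
  move=> a; elim=> [|i IH]; first by rewrite muln0 addn0.
  by rewrite (_ : a + m * i.+1 = (a + m * i) + m) ?hF ?IH // mulnS; lia.
under eq_bigr => i _ do under eq_bigr => a _ do rewrite hF'.
by rewrite sum_nat_const card_ord.
Qed.

Lemma sq_shift a m M i : M %| 2 * m -> M %| m ^ 2 ->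
  (a + m * i) ^ 2 = a ^ 2 %[mod M].
Proof.
move=> /dvdnP[j hj] /dvdnP[k hk].
have -> : (a + m * i) ^ 2 = a ^ 2 + (j * a * i + k * i ^ 2) * M.
  rewrite sqrnD expnMn hk.
  have -> : 2 * (a * (m * i)) = (2 * m) * (a * i) by ring.
  rewrite hj; ring.
by rewrite addnC modnMDl.
Qed.

Lemma modsq_r a x y c M : x ^ 2 = y ^ 2 %[mod M] ->
  (a ^ 2 + x ^ 2 == c %[mod M]) = (a ^ 2 + y ^ 2 == c %[mod M]).
Proof. by move=> h; rewrite -modnDmr h modnDmr. Qed.

Lemma modsq_l a x y c M : x ^ 2 = y ^ 2 %[mod M] ->
  (x ^ 2 + a ^ 2 == c %[mod M]) = (y ^ 2 + a ^ 2 == c %[mod M]).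
Proof. by move=> h; rewrite -modnDml h modnDml. Qed.

Lemma cnt_lift m M t : M %| 2 * m -> M %| m ^ 2 ->
  cnt (m * t) M = t ^ 2 * cnt m M.
Proof.
move=> h1 h2; rewrite /cnt.
have sh : forall x, (x + m) ^ 2 = x ^ 2 %[mod M].
  by move=> x; rewrite -{1}(muln1 m) sq_shift.
have hb : forall a, \sum_(b < m * t) ((a ^ 2 + b ^ 2 == 1 %[mod M]) : nat)
    = t * \sum_(b < m) ((a ^ 2 + b ^ 2 == 1 %[mod M]) : nat).
  move=> a; apply: (sum_periodic (fun b => ((a ^ 2 + b ^ 2 == 1 %[mod M]) : nat))).
  by move=> b; rewrite (modsq_r _ _ _ _ _ (sh b)).
under eq_bigr => a _ do rewrite hb.
rewrite -big_distrr /=.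
rewrite (sum_periodic (fun a => \sum_(b < m) ((a ^ 2 + b ^ 2 == 1 %[mod M]) : nat))).
  by rewrite mulnA mulnn.
move=> a; apply: eq_bigr => b _; by rewrite (modsq_l _ _ _ _ _ (sh a)).
Qed.

Lemma count_lin1 p c u : prime p -> ~~ (p %| u) ->
  \sum_(i < p) ((p %| c + u * i) : nat) = 1.
Proof.
move=> pp pu; have p0 := prime_gt0 pp.
rewrite sum_bool_card.
pose f (i : 'I_p) : 'I_p := Ordinal (ltn_pmod (c + u * i) p0).
have finj : injective f.
  move=> i j /(congr1 val) /= /eqP hij; apply: val_inj => /=.
  wlog le : i j hij / i <= j.
    move=> H; case: (leqP i j) => [h|/ltnW h]; first exact: H.
    by symmetry; apply: H => //; rewrite eq_sym.
  move: hij; rewrite eq_sym eqn_modDl eqn_mod_dvd ?leq_mul2l ?le ?orbT //.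
  rewrite -mulnBr Euclid_dvdM // (negbTE pu) /=.
  have lt : j - i < p by have := ltn_ord j; lia.
  case: (posnP (j - i)) => [h0|hp]; first lia.
  by move=> /(dvdn_leq hp); lia.
pose z : 'I_p := Ordinal p0.
have -> : [set i : 'I_p | p %| c + u * i] = f @^-1: [set z].
  by apply/setP => i; rewrite !inE -val_eqE.
by rewrite card_preimset // cards1.
Qed.

Lemma count_lin2 p c u v : prime p -> ~~ (p %| u) || ~~ (p %| v) ->
  \sum_(i < p) \sum_(j < p) ((p %| c + u * i + v * j) : nat) = p.
Proof.
move=> pp /orP [pu|pv].
  rewrite exchange_big /=.
  under eq_bigr => j _ do under eq_bigr => i _ do rewrite addnAC.
  under eq_bigr => j _ do rewrite count_lin1 //.
  by rewrite sum_nat_const card_ord muln1.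
under eq_bigr => i _ do rewrite count_lin1 //.
by rewrite sum_nat_const card_ord muln1.
Qed.

Lemma cnt_hensel p m M e d : prime p -> 1 < M -> 2 * m = e * M ->
  m ^ 2 = d * (M * p) ->
  (forall a b, a ^ 2 + b ^ 2 == 1 %[mod M] -> ~~ (p %| e * a) || ~~ (p %| e * b)) ->
  cnt (m * p) (M * p) = p * cnt m M.
Proof.
move=> pp M1 he hd nd.
have M0 : 0 < M by lia.
have d1 : M %| 2 * m by rewrite he dvdn_mull.
have d2 : M %| m ^ 2 by rewrite hd dvdn_mull // dvdn_mulr.
have pw : forall a b, \sum_(i < p) \sum_(j < p)
    ((((a + m * i) ^ 2 + (b + m * j) ^ 2 == 1 %[mod M * p])) : nat)
    = p * ((a ^ 2 + b ^ 2 == 1 %[mod M]) : nat).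
  move=> a b; case: (boolP (a ^ 2 + b ^ 2 == 1 %[mod M])) => g.
    rewrite muln1.
    pose c := (a ^ 2 + b ^ 2) %/ M.
    have ec : a ^ 2 + b ^ 2 = 1 + c * M.
      by rewrite {1}(divn_eq (a ^ 2 + b ^ 2) M) (eqP g) (modn_small M1) addnC.
    have key : forall i j, (((a + m * i) ^ 2 + (b + m * j) ^ 2 == 1 %[mod M * p]))
        = (p %| c + e * a * i + e * b * j).
      move=> i j.
      have -> : (a + m * i) ^ 2 + (b + m * j) ^ 2 =
          (a ^ 2 + b ^ 2) + m ^ 2 * (i ^ 2 + j ^ 2) + (2 * m) * (a * i + b * j) by ring.
      rewrite ec hd he.
      have -> : 1 + c * M + d * (M * p) * (i ^ 2 + j ^ 2) + e * M * (a * i + b * j)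
          = (d * (i ^ 2 + j ^ 2)) * (M * p) + (M * (c + e * a * i + e * b * j) + 1) by ring.
      rewrite modnMDl eqn_mod_dvd ?leq_addl // addnK dvdn_pmul2l //.
    under eq_bigr => i _ do under eq_bigr => j _ do rewrite key.
    exact: count_lin2 (nd a b g).
  rewrite muln0; apply: big1 => i _; apply: big1 => j _.
  apply/eqP; rewrite eqb0; apply: contra g => h.
  have h' : (a + m * i) ^ 2 + (b + m * j) ^ 2 == 1 %[mod M].
    by apply/eqP; have := congr1 (modn^~ M) (eqP h); rewrite /= !modn_dvdm ?dvdn_mulr.
  by rewrite (modsq_l _ _ _ _ _ (sq_shift a m M i d1 d2)) (modsq_r _ _ _ _ _ (sq_shift b m M j d1 d2)) in h'.
rewrite /cnt (sum_split (fun x => \sum_(y < m * p) (((x ^ 2 + y ^ 2 == 1 %[mod M * p])) : nat))).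
under eq_bigr => i _ do under eq_bigr => a _ do
  rewrite (sum_split (fun y => ((((a + m * i) ^ 2 + y ^ 2 == 1 %[mod M * p])) : nat))).
rewrite exchange_big /= big_distrr; apply: eq_bigr => a _.
under eq_bigr => i _ do rewrite exchange_big /=.
rewrite exchange_big /= big_distrr; apply: eq_bigr => b _.
exact: pw.
Qed.

Lemma modsum m x y : ((x %% m) ^ 2 + (y %% m) ^ 2) %% m = (x ^ 2 + y ^ 2) %% m.
Proof. by rewrite -modnDm !modnXm modnDm. Qed.

Lemma Phi_mul m n : 0 < m -> 0 < n -> coprime m n -> Phi (m * n) = Phi m * Phi n.
Proof.
move=> m0 n0 co; rewrite /Phi -cardsX.
have mn0 : 0 < m * n by rewrite muln_gt0 m0.
pose rm (x : nat) : 'I_m := Ordinal (ltn_pmod x m0).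
pose rn (x : nat) : 'I_n := Ordinal (ltn_pmod x n0).
pose f (ab : 'I_(m * n) * 'I_(m * n)) := ((rm ab.1, rm ab.2), (rn ab.1, rn ab.2)).
have finj : injective f.
  move=> [x y] [x' y'] /(congr1 (fun z => (nat_of_ord z.1.1, nat_of_ord z.1.2,
     nat_of_ord z.2.1, nat_of_ord z.2.2))) /= [e1 e2 e3 e4].
  have ex : x = x' :> nat.
    have : x == x' %[mod m * n] by rewrite chinese_remainder // e1 e3 !eqxx.
    by rewrite !modn_small // => /eqP.
  have ey : y = y' :> nat.
    have : y == y' %[mod m * n] by rewrite chinese_remainder // e2 e4 !eqxx.
    by rewrite !modn_small // => /eqP.
  by congr (_, _); apply: val_inj.
rewrite -(card_imset _ finj); apply: eq_card => -[[a1 b1] [a2 b2]].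
rewrite in_setX /Gn !in_set.
apply/imsetP/idP.
  move=> [[x y]]; rewrite in_set /= => hxy [-> -> -> ->] /=.
  by rewrite (modsum m x y) (modsum n x y) -(chinese_remainder co).
move=> /andP [h1 h2].
pose x : 'I_(m * n) := Ordinal (ltn_pmod (chinese m n a1 a2) mn0).
pose y : 'I_(m * n) := Ordinal (ltn_pmod (chinese m n b1 b2) mn0).
have xm : x %% m = a1 by rewrite /= modn_dvdm ?dvdn_mulr // chinese_modl // modn_small.
have xn : x %% n = a2 by rewrite /= modn_dvdm ?dvdn_mull // chinese_modr // modn_small.
have ym : y %% m = b1 by rewrite /= modn_dvdm ?dvdn_mulr // chinese_modl // modn_small.
have yn : y %% n = b2 by rewrite /= modn_dvdm ?dvdn_mull // chinese_modr // modn_small.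
exists (x, y).
  rewrite in_set /= (chinese_remainder co).
  by rewrite -(modsum m x y) -(modsum n x y) xm ym xn yn h1 h2.
by congr (_, _); congr (_, _); apply: val_inj => /=.
Qed.

End Part0.
Import Part0.

Module Part1.

Lemma pow_gt1 p k : 1 < p -> 1 < p ^ k.+1.
Proof. by move=> p1; rewrite (leq_trans p1) // -{1}(expn1 p) leq_pexp2l // ltnW. Qed.

Lemma Phi_pow_step p k : prime p -> odd p -> Phi (p ^ k.+2) = p * Phi (p ^ k.+1).
Proof.
move=> pp op; have p1 := prime_gt1 pp; have p2 := odd_prime_gt2 op pp.
rewrite !Phi_cnt (expnSr p k.+1) (@cnt_hensel p _ _ 2 (p ^ k)) //.
- exact: pow_gt1.
- by rewrite -expnSr -expnD -expnM; congr (p ^ _); lia.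
move=> a b h.
have np2 : ~~ (p %| 2) by apply/negP => /(dvdn_leq) => /(_ isT); lia.
rewrite !Euclid_dvdM // (negbTE np2) /=.
case: (boolP (p %| a)) => pa; case: (boolP (p %| b)) => pb //=.
have := congr1 (modn^~ p) (eqP h); rewrite /= !modn_dvdm ?dvdn_exp //.
have : p %| a ^ 2 + b ^ 2 by rewrite dvdn_add // dvdn_exp.
by rewrite /dvdn => /eqP ->; rewrite modn_small.
Qed.

Lemma Phi_odd_pow p k : prime p -> odd p -> Phi (p ^ k.+1) = p ^ k * Phi p.
Proof.
move=> pp op; elim: k => [|k IH]; first by rewrite expn1 mul1n.
by rewrite Phi_pow_step // IH mulnA -expnS.
Qed.

Lemma Phi_2step i : Phi (2 ^ i.+4) = 2 * Phi (2 ^ i.+3).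
Proof.
have nd : forall M a b, 2 %| M -> a ^ 2 + b ^ 2 == 1 %[mod M] ->
    ~~ (2 %| 1 * a) || ~~ (2 %| 1 * b).
  move=> M a b dM h; rewrite !mul1n.
  case: (boolP (2 %| a)) => pa; case: (boolP (2 %| b)) => pb //=.
  have := congr1 (modn^~ 2) (eqP h); rewrite /= !modn_dvdm //.
  have : 2 %| a ^ 2 + b ^ 2 by rewrite dvdn_add // dvdn_exp.
  by rewrite /dvdn => /eqP ->.
have L : forall j, Phi (2 ^ j.+3) = 4 * cnt (2 ^ j.+2) (2 ^ j.+3).
  move=> j; rewrite Phi_cnt (expnSr 2 j.+2) cnt_lift //.
  - by rewrite mulnC.
  by rewrite -expnSr -expnM dvdn_Pexp2l //; lia.
rewrite L (expnSr 2 i.+2) (expnSr 2 i.+3) (@cnt_hensel 2 _ _ 1 (2 ^ i)) //.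
- rewrite -!expnSr L; lia.
- exact: pow_gt1.
- by rewrite mul1n expnS.
- by rewrite -expnSr -expnD -expnM; congr (2 ^ _); lia.
move=> a b; apply: nd; by rewrite expnS dvdn_mulr.
Qed.

Lemma Phi_2pow k : Phi (2 ^ k.+2) = 2 ^ k.+3.
Proof.
elim: k => [|k IH]; first by rewrite Phi_cnt /cnt !big_ord_recr !big_ord0.
case: k IH => [|k] IH; first by rewrite Phi_cnt /cnt !big_ord_recr !big_ord0.
by rewrite Phi_2step IH -expnS.
Qed.

Lemma Phi_two : Phi 2 = 2.
Proof. by rewrite Phi_cnt /cnt !big_ord_recr !big_ord0. Qed.
Lemma Phi_one : Phi 1 = 1.
Proof. by rewrite Phi_cnt /cnt !big_ord_recr !big_ord0. Qed.

End Part1.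
Import Part1.

Module Part2.
Local Open Scope ring_scope.

Lemma circle_count (F : finFieldType) : (2 : F) != 0 ->
  addn #|[set xy : F * F | xy.1 ^+ 2 + xy.2 ^+ 2 == 1]|
   #|[set t : F | t ^+ 2 == -1]| = #|F|.+1.
Proof.
move=> two0.
set C := [set xy : F * F | _].
set N := [set t : F | _].
pose B := ~: N.
have hC : (-1, 0) \in C by rewrite inE /= sqrrN expr1n expr0n /= addr0.
pose g (t : F) : F * F := ((1 - t ^+ 2) / (1 + t ^+ 2), 2 * t / (1 + t ^+ 2)).
pose h (xy : F * F) : F := xy.2 / (1 + xy.1).
have nz : forall t, t \in B -> 1 + t ^+ 2 != 0.
  move=> t; rewrite !inE addrC addr_eq0.
  by [].
have hg : forall t, t \in B -> h (g t) = t.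
  move=> t /nz tz; rewrite /h /g /=.
  field.
  by rewrite tz /= (_ : 1 + t ^+ 2 + (1 - t ^+ 2) = 2) //; ring.
have ginj : {in B &, injective g}.
  by move=> s t sB tB e; rewrite -(hg s sB) -(hg t tB) e.
have two_ne : forall a b : F, a = - b -> a - - b = 2 -> False.
  move=> a b e2 e3; move: two0; rewrite -e3 e2 subrr.
  by rewrite eqxx.
have img : g @: B = C :\ (-1, 0).
  apply/setP => xy; apply/imsetP/idP.
    move=> [t tB ->]; have tz := nz t tB.
    rewrite !inE /=; apply/andP; split.
      apply/negP => /eqP [] /(congr1 (fun z => z * (1 + t ^+ 2))).
      rewrite mulfVK // mulN1r => e _.
      by apply: (two_ne _ _ e); ring.
    by apply/eqP; field.
  case: xy => x y; rewrite !inE /= => /andP [ne /eqP e].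
  have ey : y ^+ 2 = 1 - x ^+ 2 by rewrite -e; ring.
  have x1 : 1 + x != 0.
    apply/negP; rewrite addrC addr_eq0 => /eqP hx.
    move: ey; rewrite hx sqrrN expr1n subrr => /eqP; rewrite expf_eq0 /= => /eqP hy.
    by move: ne; rewrite hx hy eqxx.
  have ht2 : (y / (1 + x)) ^+ 2 = (1 - x) / (1 + x).
    by rewrite expr_div_n ey; field.
  exists (h (x, y)).
    rewrite !inE /h /= ht2; apply/negP => /eqP /(congr1 (fun z => z * (1 + x))).
    rewrite mulfVK // mulN1r => e2.
    by apply: (two_ne _ _ e2); ring.
  rewrite /g /h /= ht2; congr (_, _); field.
    by rewrite x1 /= (_ : 1 + x + (1 - x) = 2) //; ring.
  by rewrite x1 /= (_ : 1 + x + (1 - x) = 2) //; ring.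
have cB : (#|B| + #|N| = #|F|)%N by rewrite addnC cardsC.
rewrite (cardsD1 (-1, 0) C) hC -img card_in_imset //.
by rewrite add1n addSn cB.
Qed.

End Part2.
Import Part2.

Module Part3.

Lemma Fp_eq_nat a b p : prime p -> ((a%:R : 'F_p) == b%:R)%R = (a == b %[mod p]).
Proof. by move=> pp; rewrite -val_eqE /= !val_Fp_nat. Qed.

Lemma Phi_Fp p : prime p ->
  Phi p = #|[set xy : 'F_p * 'F_p | (xy.1 ^+ 2 + xy.2 ^+ 2 == 1)%R]|.
Proof.
move=> pp; have ec := Fp_cast pp.
pose phi (xy : 'F_p * 'F_p) : 'I_p * 'I_p := (cast_ord ec xy.1, cast_ord ec xy.2).
have pinj : injective phi.
  move=> [x y] [x' y'] /(congr1 (fun z => (nat_of_ord z.1, nat_of_ord z.2))) /= [e1 e2].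
  by congr (_, _); apply: val_inj.
rewrite /Phi -(card_imset _ pinj); apply: eq_card => -[a b].
rewrite /Gn !in_set /=.
apply/idP/imsetP.
  move=> h; exists ((a%:R : 'F_p), (b%:R : 'F_p))%R.
    rewrite in_set /= -natrX -natrX -natrD -[1%R]/(1%:R)%R Fp_eq_nat //.
  by congr (_, _); apply: val_inj; rewrite /= val_Fp_nat // modn_small.
move=> [[x y]]; rewrite in_set /= => hxy [-> ->] /=.
by rewrite -(Fp_eq_nat _ _ _ pp) natrD !natrX !natr_Zp mulr1n.
Qed.

Local Open Scope ring_scope.

Lemma two_Fp p : prime p -> p != 2%N -> (2 : 'F_p) != 0.
Proof.
move=> pp p2; have p3 : (2 < p)%N by have := prime_gt1 pp; lia.
by rewrite -[0]/(0%:R) Fp_eq_nat // !modn_small //; lia.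
Qed.

Lemma beta_odd p : prime p -> p != 2%N ->
  beta p = (if [exists t : 'F_p, t ^+ 2 == -1] then 1 else -1).
Proof.
move=> pp p2; rewrite /beta (negbTE p2) /legendre dvdzE /= Euclid_dvd1 //.
congr (if _ then _ else _); apply/existsP/existsP => -[x hx].
  exists (x%:R : 'F_p).
  have e : x%:Z ^+ 2 - -1 = (x ^ 2 + 1)%N :> int by lia.
  move: hx; rewrite e dvdzE /= => hx.
  rewrite -subr_eq0 opprK -natrX -[1]/(1%:R) -natrD.
  by rewrite -[0]/(0%:R) Fp_eq_nat // mod0n.
exists (cast_ord (Fp_cast pp) x).
have e : (nat_of_ord x)%:Z ^+ 2 - -1 = (x ^ 2 + 1)%N :> int by lia.
rewrite /= e dvdzE /=.
move: hx; rewrite -subr_eq0 opprK -[x in x ^+ 2]natr_Zp -natrX /= -[1]/(1%:R) -natrD.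
by rewrite -[0]/(0%:R) Fp_eq_nat // mod0n.
Qed.

Lemma N_card p : prime p -> p != 2%N ->
  #|[set t : 'F_p | t ^+ 2 == -1]| = if [exists t : 'F_p, t ^+ 2 == -1] then 2%N else 0%N.
Proof.
move=> pp p2; have two0 := two_Fp p pp p2.
case: existsP => [[t0 ht0]|none].
  have -> : [set t : 'F_p | t ^+ 2 == -1] = [set t0; -t0].
    by apply/setP => t; rewrite !inE -(eqP ht0) eqf_sqr.
  rewrite cards2; case: eqP => // e.
  have : t0 * 2 = 0 by rewrite mulr_natr mulr2n {1}e addNr.
  move/eqP; rewrite mulf_eq0 (negbTE two0) orbF => /eqP t00.
  by move: ht0; rewrite t00 expr0n /= eq_sym oppr_eq0 oner_eq0.
apply/eqP; rewrite cards_eq0; apply/eqP/setP => t; rewrite !inE.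
by apply/negbTE/negP => h; apply: none; exists t.
Qed.

Lemma Phi_prime_odd p : prime p -> p != 2%N ->
  (Phi p)%:Q = p%:Q - (beta p)%:~R.
Proof.
move=> pp p2; have := @circle_count _ (two_Fp p pp p2).
rewrite -Phi_Fp // card_Fp // N_card // beta_odd //.
case: ifP => _ h.
  have := congr1 (fun n : nat => n%:R : rat) h; rewrite /= natrD -addn1 natrD.
  by move=> e; rewrite (_ : (1 : int)%:~R = 1 :> rat) //; lra.
have := congr1 (fun n : nat => n%:R : rat) h; rewrite /= natrD -addn1 natrD.
by move=> e; rewrite (_ : (-1 : int)%:~R = -1 :> rat) //; lra.
Qed.

End Part3.
Import Part3.

Module Part4.
Local Open Scope ring_scope.

Lemma pp_formula p k : prime p ->
  (Phi (p ^ k.+1))%:Q = (if (4 %| p ^ k.+1)%N then 2 * (p ^ k.+1)%N%:Q else (p ^ k.+1)%N%:Q)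
    * (1 - (beta p)%:~R / p%:Q).
Proof.
move=> pp; have p0 : p%:Q != 0 by rewrite pnatr_eq0 -lt0n prime_gt0.
case: (eqVneq p 2%N) => [->|p2].
  rewrite /beta eqxx /= mul0r subr0 mulr1.
  case: k => [|k].
    by rewrite expn1 Phi_two.
  rewrite Phi_2pow (_ : (4 %| 2 ^ k.+2)%N) ?expnS ?natrM; last first.
    by rewrite mulnA dvdn_mulr.
  by ring.
have op : odd p by case: (even_prime pp) => // e; rewrite e in p2.
have n4 : ~~ (4 %| p ^ k.+1)%N.
  apply/negP => /(dvdn_trans (isT : (2 %| 4)%N)).
  by rewrite Euclid_dvdX // dvdn2 op.
have := Phi_prime_odd p pp p2; rewrite -!pmulrn => e.
rewrite (negbTE n4) Phi_odd_pow // natrM e expnS natrM.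
rewrite -pmulrn in p0.
by field.
Qed.

Lemma primes_split m p k : prime p -> coprime p m -> (0 < m)%N ->
  perm_eq (primes (m * p ^ k.+1)%N) (p :: primes m).
Proof.
move=> pp cop m0.
have pm : p \notin primes m.
  rewrite mem_primes pp m0 /=; apply/negP => pd.
  by move: cop; rewrite /coprime (gcdn_idPl pd) => /eqP p1; move: (prime_gt1 pp); rewrite p1.
apply: uniq_perm; first exact: primes_uniq.
  by rewrite /= pm primes_uniq.
move=> q.
have e : primes (p ^ k.+1) = [:: p] by rewrite primesX // primes_prime.
have pk0 : (0 < p ^ k.+1)%N by rewrite expn_gt0 prime_gt0.
by rewrite (primesM _ m0 pk0) e !inE orbC.
Qed.

End Part4.
Import Part4.

Local Open Scope ring_scope.

Theorem mainTheorem3 (n : nat) (hn : (0 < n)%N) :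
  (Phi n)%:Q =
    (if (4 %| n)%N then 2 * n%:Q else n%:Q) *
    \prod_(p <- primes n) (1 - (beta p)%:~R / p%:Q).
Proof.
elim: n {-2}n (leqnn n) hn => [|N IH] n le hn; first by lia.
have [n1|n1] : n = 1%N \/ (1 < n)%N by lia.
  rewrite n1 Phi_one (_ : primes 1 = [::]) // big_nil mulr1.
  by [].
pose p := pdiv n; have pp : prime p := pdiv_prime n1.
case: (pfactor_coprime pp hn) => m cop en.
have kp : (0 < logn p n)%N by rewrite logn_gt0 mem_primes pp hn pdiv_dvd.
move: en; case: (logn p n) kp => // k _ en.
have m0 : (0 < m)%N by move: hn; rewrite en muln_gt0 => /andP[].
have pk1 : (1 < p ^ k.+1)%N := pow_gt1 p k (prime_gt1 pp).
have mlt : (m <= N)%N.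
  have : (m < n)%N by rewrite en -{1}(muln1 m) ltn_pmul2l.
  lia.
have IHm := IH m mlt m0.
have cop' : coprime m (p ^ k.+1) by rewrite coprime_sym coprimeXl.
rewrite en (Phi_mul m (p ^ k.+1) m0 (ltnW pk1) cop').
rewrite (perm_big _ (primes_split m p k pp cop m0)) big_cons /=.
rewrite PoszM intrM IHm pp_formula //.
have p0 : p%:Q != 0 by rewrite pnatr_eq0 -lt0n prime_gt0.
case: (eqVneq p 2%N) => [p2|p2].
  have om : odd m by rewrite -coprime2n -p2.
  have n4m : ~~ (4 %| m)%N.
    by apply/negP => /(dvdn_trans (isT : (2 %| 4)%N)); rewrite dvdn2 om.
  have e4 : (4 %| m * p ^ k.+1)%N = (4 %| p ^ k.+1)%N.
    have c4 : coprime 4 m by rewrite (_ : 4 = 2 ^ 2)%N // coprimeXl // coprime2n.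
    by rewrite (Gauss_dvdr _ c4).
  rewrite e4 (negbTE n4m) PoszM intrM; case: (4 %| p ^ k.+1)%N; ring.
have op : odd p by case: (even_prime pp) => // e; rewrite e in p2.
have n4 : ~~ (4 %| p ^ k.+1)%N.
  apply/negP => /(dvdn_trans (isT : (2 %| 4)%N)).
  by rewrite Euclid_dvdX // dvdn2 op.
have e4 : (4 %| m * p ^ k.+1)%N = (4 %| m)%N.
  have c4 : coprime 4 (p ^ k.+1) by rewrite (_ : 4 = 2 ^ 2)%N // coprimeXl // coprimeXr // coprime2n.
  by rewrite (Gauss_dvdl _ c4).
rewrite e4 (negbTE n4) PoszM intrM; case: (4 %| m)%N; ring.
Qed.
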